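(* Let $T_1(B_1,C_1)$ and $T_2(B_2,C_2)$ be proper $(2,3)$-poles (with $|B_i|=2$, $|C_i|=3$). Form the $(2,2,1)$-pole $M=\operatorname{TT}(T_1,T_2)$ by performing the junction of $C_1$ and $C_2$ (creating three new edges), choosing one of these three new edges, subdividing it with a new vertex $v$, and attaching to $v$ a new dangling edge with semiedge $r$; the connectors of $M$ are $B_1=\{b,b'\}$, $B_2=\{c,c'\}$ and $\{r\}$. Then every colouring $\varphi$ of $M$ satisfies $\varphi(b)\ne\varphi(b')$, $\varphi(c)\ne\varphi(c')$ and $\varphi(b)+\varphi(b')+\varphi(c)+\varphi(c')+\varphi(r)=0$. Moreover, if $T_1$ and $T_2$ are both perfect, then every $5$-tuple $(a_1,a_2,d_1,d_2,e)\in\mathbb{K}^5$ with $a_1\ne a_2$, $d_1\ne d_2$ and $a_1+a_2+d_1+d_2+e=0$ equals $(\varphi(b),\varphi(b'),\varphi(c),\varphi(c'),\varphi(r))$ for some colouring $\varphi$ of $M$.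
   Context: A multipole consists of vertices and edges; each edge has two ends, each either incident with a vertex or free; a free end is a semiedge. All multipoles are cubic (every vertex is incident with exactly three edge ends; loops and parallel edges allowed). Semiedges are partitioned into connectors; a $(c_1,\dots,c_n)$-pole has $n$ connectors of sizes $c_1,\dots,c_n$. The junction of two semiedges identifies the two free ends into a single edge; the junction of two connectors of equal size performs junctions of their semiedges along an arbitrary bijection. Let $\mathbb{K}=\{(0,1),(1,0),(1,1)\}\subset\mathbb{Z}_2\times\mathbb{Z}_2$. A colouring of a multipole assigns elements of $\mathbb{K}$ to edges so that at every vertex the three incident edge ends get distinct colours (equivalently sum to $0$). The flow through a connector $S$ under $\varphi$ is $\varphi_*(S)=\sum_{e\in S}\varphi(e)\in\mathbb{Z}_2\times\mathbb{Z}_2$. A $(2,3)$-pole $T(B,C)$ is proper if $\varphi_*(B)\ne 0$ and $\varphi_*(C)\neq0$ for every colouring $\varphi$ of $T$. A proper $(2,3)$-pole $T(\{a_1,a_2\},\{b_1,b_2,b_3\})$ is perfect if the set of tuples $(\varphi(a_1),\varphi(a_2),\varphi(b_1),\varphi(b_2),\varphi(b_3))$ over all its colourings equals $\{(x_1,x_2,y_1,y_2,y_3)\in\mathbb{K}^5: x_1+x_2=y_1+y_2+y_3\ne 0\}$. *)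

(* Defs.v *)
From HB Require Import structures.
From mathcomp Require Import all_boot all_algebra perm.
Set Implicit Arguments. Unset Strict Implicit. Unset Printing Implicit Defensive.
Import GRing.Theory.
Local Open Scope ring_scope.

(* The group Z2 x Z2; colours are its nonzero elements (the set K). *)
Definition G := ('Z_2 * 'Z_2)%type.

(* A multipole, given by its edge ends ("darts"), its vertices, the
   incidence of each end (Some v = incident with vertex v, None = free end,
   i.e. a semiedge), and the involution [partner] sending an edge end to the
   other end of the same edge.  Edges are the orbits {x, partner x}. *)
Record multipole := Multipole {
  dart : finType;
  vert : finType;
  inc : dart -> option vert;
  partner : dart -> dart }.
Arguments inc : clear implicits.
Arguments partner : clear implicits.

Definition cubic_multipole (N : multipole) : Prop :=
  (forall x, partner N (partner N x) = x) /\
  (forall x, partner N x != x) /\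
  (forall v : vert N, #|[set x | inc N x == Some v]| = 3%N).

Definition colouring (N : multipole) (phi : dart N -> G) : Prop :=
  (forall x, phi x != 0) /\
  (forall x, phi (partner N x) = phi x) /\
  (forall x y v, inc N x = Some v -> inc N y = Some v -> x != y ->
     phi x != phi y).

(* A (2,3)-pole T(B,C): a cubic multipole whose semiedges are exactly
   a 0, a 1 (connector B) and c 0, c 1, c 2 (connector C), all distinct. *)
Definition labels23 (N : multipole) (a : 'I_2 -> dart N) (c : 'I_3 -> dart N)
  (l : 'I_2 + 'I_3) : dart N :=
  match l with inl i => a i | inr j => c j end.

Definition pole23 (N : multipole) (a : 'I_2 -> dart N) (c : 'I_3 -> dart N) :
  Prop :=
  cubic_multipole N /\
  injective (labels23 a c) /\
  (forall l, inc N (labels23 a c l) = None) /\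
  (forall x, inc N x = None -> exists l, labels23 a c l = x).

Definition proper23 (N : multipole) (a : 'I_2 -> dart N) (c : 'I_3 -> dart N) :
  Prop :=
  forall phi, colouring phi ->
    (\sum_(i < 2) phi (a i) != 0) /\ (\sum_(j < 3) phi (c j) != 0).

Definition perfect23 (N : multipole) (a : 'I_2 -> dart N) (c : 'I_3 -> dart N) :
  Prop :=
  proper23 a c /\
  forall (x : 'I_2 -> G) (y : 'I_3 -> G),
    (exists phi, colouring phi /\ (forall i, phi (a i) = x i) /\
                 (forall j, phi (c j) = y j)) <->
    [/\ (forall i, x i != 0), (forall j, y j != 0),
        \sum_(i < 2) x i = \sum_(j < 3) y j & \sum_(i < 2) x i != 0].

Definition union (N1 N2 : multipole) : multipole :=
  @Multipole (dart N1 + dart N2)%type (vert N1 + vert N2)%type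
    (fun x => match x with
              | inl x1 => omap inl (inc N1 x1)
              | inr x2 => omap inr (inc N2 x2) end)
    (fun x => match x with
              | inl x1 => inl (partner N1 x1)
              | inr x2 => inr (partner N2 x2) end).

(* Junction along a (partial) matching m of free ends: each pair {x, m x}
   of matched semiedges is identified, merging the two edges containing
   them.  The ends of the junction are the unmatched ends; the other end of
   the edge through an unmatched end x is the unique other unmatched end in
   the chain x, partner x, m (partner x), partner (m (partner x)), ... *)
Definition jdart (N : multipole) (m : dart N -> option (dart N)) :=
  sig (fun x : dart N => m x == None).

Definition jrel (N : multipole) (m : dart N -> option (dart N)) : rel (dart N) :=
  fun x y => (y == partner N x) || (m x == Some y).

Definition junction (N : multipole) (m : dart N -> option (dart N)) :
  multipole :=
  @Multipole (jdart m) (vert N)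
    (fun x => inc N (val x))
    (fun x => match [pick y : jdart m |
                      (y != x) && connect (jrel m) (val x) (val y)] with
              | Some y => y | None => x end).

(* The gadget used for subdivision: one vertex with three dangling edges.
   Darts (false, i) are at the vertex, (true, i) are free;
   (true,0) and (true,1) are joined to the chosen new edge, (true,2) is r. *)
Definition Ygadget : multipole :=
  @Multipole (bool * 'I_3)%type unit
    (fun x => if x.1 then None else Some tt)
    (fun x => (~~ x.1, x.2)).

Definition TTu (N1 N2 : multipole) : multipole := union (union N1 N2) Ygadget.

(* The matching performing the junction of C1 and C2 along the bijection
   s (c1 j is joined to c2 (s j)), except that the new edge for j = k is
   subdivided by the vertex of the gadget. *)
Definition TTmatch (N1 N2 : multipole) (c1 : 'I_3 -> dart N1)
  (c2 : 'I_3 -> dart N2) (s : {perm 'I_3}) (k : 'I_3) :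
  dart (TTu N1 N2) -> option (dart (TTu N1 N2)) :=
  fun x => match x with
  | inl (inl x1) =>
      match [pick j | c1 j == x1] with
      | Some j => if j == k then Some (inr (true, inord 0))
                  else Some (inl (inr (c2 (s j))))
      | None => None end
  | inl (inr x2) =>
      match [pick j | c2 (s j) == x2] with
      | Some j => if j == k then Some (inr (true, inord 1))
                  else Some (inl (inl (c1 j)))
      | None => None end
  | inr (b, i) =>
      if b then
        if val i == 0%N then Some (inl (inl (c1 k)))
        else if val i == 1%N then Some (inl (inr (c2 (s k))))
        else None
      else None
  end.

Definition TT (N1 N2 : multipole) (c1 : 'I_3 -> dart N1)
  (c2 : 'I_3 -> dart N2) (s : {perm 'I_3}) (k : 'I_3) : multipole :=
  junction (TTmatch c1 c2 s k).

Definition TTcol (N1 N2 : multipole) (c1 : 'I_3 -> dart N1)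
  (c2 : 'I_3 -> dart N2) (s : {perm 'I_3}) (k : 'I_3)
  (phi : dart (TT c1 c2 s k) -> G) (x : dart (TTu N1 N2)) : G :=
  oapp phi 0 (insub x).

Definition TT_b (N1 N2 : multipole) (a1 : 'I_2 -> dart N1) (i : 'I_2) :
  dart (TTu N1 N2) := inl (inl (a1 i)).
Definition TT_c (N1 N2 : multipole) (a2 : 'I_2 -> dart N2) (i : 'I_2) :
  dart (TTu N1 N2) := inl (inr (a2 i)).
Definition TT_r (N1 N2 : multipole) : dart (TTu N1 N2) := inr (true, inord 2).

(* Main.v *)
Require Import Defs.
From HB Require Import structures.
From mathcomp Require Import all_boot all_algebra perm.
Import GRing.Theory.
Local Open Scope ring_scope.
Set Implicit Arguments. Unset Strict Implicit.

Lemma Z2cases (x : 'Z_2) : x = 0 \/ x = 1.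
Proof. case: x => [[|[|m]] Hm]; [left|right|]; try by apply/val_inj. by []. Qed.
Lemma Gcases (x : G) : [\/ x = (0,0), x = (0,1), x = (1,0) | x = (1,1)].
Proof. case: x => a b; case: (Z2cases a) => ->; case: (Z2cases b) => ->; by constructor. Qed.
Lemma addxx (x : G) : x + x = 0.
Proof. by apply/eqP; case: (Gcases x) => ->. Qed.
Lemma three (a b c : G) : a != 0 -> b != 0 -> c != 0 -> a != b -> b != c -> a != c -> a + b + c = 0.
Proof. move=> h1 h2 h3 h4 h5 h6; apply/eqP; move: h1 h2 h3 h4 h5 h6.
by case: (Gcases a) => ->; case: (Gcases b) => ->; case: (Gcases c) => ->. Qed.
Lemma G_add_eq (x y : G) : (x + y == 0) = (x == y).
Proof. by case: (Gcases x) => ->; case: (Gcases y) => ->. Qed.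

Lemma pick_sub (T : finType) (P Q : pred T) a :
  pick P = Some a -> Q a -> (forall x, Q x -> P x) -> pick Q = Some a.
Proof.
rewrite /pick /enum_mem; elim: (Finite.enum T) => //= x s IH.
case: ifP => Px /=.
  by case=> <- Qx _; rewrite [x \in Q]Qx.
move=> H Qa sub; case: ifP => Qx /=; last exact: IH.
by move: Px; rewrite [x \in P](sub _ Qx).
Qed.

Lemma sum_inv (T : finType) (p : T -> T) (F : T -> G) :
  (forall x, p (p x) = x) -> (forall x, p x != x) -> (forall x, F (p x) = F x) ->
  \sum_x F x = 0.
Proof.
move=> pK pn Fp.
have pinj : injective p := can_inj pK.
pose P x := (enum_rank x < enum_rank (p x))%N.
rewrite (bigID P) /=.
have -> : \sum_(i | ~~ P i) F i = \sum_(i | P i) F i.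
  rewrite (reindex_inj pinj) /=; apply: eq_big => x; last by rewrite Fp.
  rewrite /P pK -leqNgt leq_eqVlt.
  case: eqP => [E|//].
  by have := congr1 enum_val (val_inj E); rewrite !enum_rankK => E'; move: (pn x); rewrite -E' eqxx.
by rewrite addxx.
Qed.

Lemma sum3 (T : finType) (A : {set T}) (F : T -> G) :
  #|A| = 3%N -> (forall x, x \in A -> F x != 0) ->
  (forall x y, x \in A -> y \in A -> x != y -> F x != F y) ->
  \sum_(x in A) F x = 0.
Proof.
move=> cA nz inj.
rewrite -big_enum.
have := enum_uniq (mem A); have := mem_enum (mem A).
rewrite cardE in cA.
case: (enum A) cA => [|x [|y [|z [|]]]] //= _ mem.
rewrite !big_cons big_nil addr0 addrA.
rewrite !inE !negb_or => /and3P[/andP[xy xz] yz _].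
have xA : x \in A by rewrite -[x \in A]mem inE eqxx.
have yA : y \in A by rewrite -[y \in A]mem !inE eqxx orbT.
have zA : z \in A by rewrite -[z \in A]mem !inE eqxx !orbT.
apply: three; auto.
Qed.

Lemma parity (N : multipole) (psi : dart N -> G) :
  cubic_multipole N -> colouring psi -> \sum_(x | inc N x == None) psi x = 0.
Proof.
move=> [pK [pn c3]] [nz [pp dist]].
have tot := @sum_inv _ _ psi pK pn pp.
rewrite (bigID (fun x => inc N x == None)) /= in tot.
suff S0 : \sum_(i | ~~ (inc N i == None)) psi i = 0 by rewrite S0 addr0 in tot.
rewrite (partition_big (inc N) (fun o => o != None)) //=.
apply: big1 => [[v|]] // _.
rewrite (eq_bigl (fun x => x \in [set x | inc N x == Some v])); last first.
  by move=> x; rewrite inE; case: eqP => // ->.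
apply: sum3 => // x y; rewrite !inE => /eqP xv /eqP yv; exact: dist xv yv.
Qed.

Lemma pole_sum (N : multipole) (a : 'I_2 -> dart N) (c : 'I_3 -> dart N) psi :
  pole23 a c -> colouring psi -> \sum_i psi (a i) = \sum_j psi (c j).
Proof.
move=> [cub [linj [lnone lsurj]]] col.
have P := @parity N psi cub col.
have E : \sum_(x | inc N x == None) psi x = \sum_(l : 'I_2 + 'I_3) psi (labels23 a c l).
  rewrite -(big_imset _ (in2W linj)) /=; apply: eq_bigl => x.
  apply/eqP/imsetP => [/lsurj [l <-]|[l _ ->]]; first by exists l.
  exact: lnone.
rewrite E big_sumType /= in P.
by apply/eqP; rewrite -G_add_eq; apply/eqP.
Qed.

Definition Psi (N : multipole) (m : dart N -> option (dart N)) (phi : jdart m -> G)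
  (z : dart N) : G :=
  match [pick y : jdart m | connect (jrel m) z (val y)] with
  | Some y => phi y | None => ((1, 0) : G) end.

Lemma Psi_nz (N : multipole) m (phi : jdart m -> G) z :
  colouring (N := junction m) phi -> @Psi N m phi z != 0.
Proof. by move=> [nz _]; rewrite /Psi; case: pickP. Qed.

Lemma Psi_eq (N : multipole) m (phi : jdart m -> G) z w :
  jrel m z w -> jrel m w z -> @Psi N m phi z = @Psi N m phi w.
Proof.
move=> zw wz; rewrite /Psi (@eq_pick _ (fun y : jdart m => connect (jrel m) z (val y))
   (fun y : jdart m => connect (jrel m) w (val y))) //.
move=> y; apply/idP/idP => C.
  exact: connect_trans (connect1 wz) C.
exact: connect_trans (connect1 zw) C.
Qed.

Lemma Psi_un (N : multipole) m (phi : jdart m -> G) (u : jdart m) :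
  colouring (N := junction m) phi -> @Psi N m phi (val u) = phi u.
Proof.
move=> [_ [pp _]]; rewrite /Psi.
pose Pr := (fun y : jdart m => connect (jrel m) (val u) (val y)).
rewrite -/(pick Pr).
case E: (pick Pr) => [u0|]; last first.
  by move: E; case: (pickP Pr) => // H _; move: (H u); rewrite /Pr connect0.
have Cu0 : Pr u0 by move: E; case: (pickP Pr) => // x Px [<-].
case: (eqVneq u0 u) => [->//|ne].
have := pp u; rewrite /= => <-.
have -> : [pick y | (y != u) && connect (jrel m) (val u) (val y)] = Some u0.
  apply: (@pick_sub _ Pr) => //.
  - by rewrite ne; exact: Cu0.
  - by move=> x /andP[].
by [].
Qed.

Lemma inv_col (N : multipole) m (P : dart N -> G) :
  (forall z w, jrel m z w -> P z = P w) ->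
  forall (u : jdart m), P (val (partner (junction m) u)) = P (val u).
Proof.
move=> inv u /=.
case: pickP => [y /andP[_ C]|_] //.
suff : forall z, connect (jrel m) (val u) z -> P z = P (val u) by move=> /(_ _ C).
move=> z /connectP[p pth ->] {C y}.
elim: p (val u) pth => [|x p IH] z0 //= /andP[r pth].
by rewrite (inv _ _ r); apply: IH.
Qed.

Section S.
Variables (N1 : multipole) (a1 : 'I_2 -> dart N1) (c1 : 'I_3 -> dart N1)
  (N2 : multipole) (a2 : 'I_2 -> dart N2) (c2 : 'I_3 -> dart N2)
  (s : {perm 'I_3}) (k : 'I_3).
Hypotheses (P1 : pole23 a1 c1) (P2 : pole23 a2 c2).
Local Notation m := (TTmatch c1 c2 s k).

Lemma c1_inj : injective c1.
Proof. by case: P1 => _ [li _] i j E; have [] := @li (inr i) (inr j) E. Qed.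
Lemma c2s_inj : injective (fun j => c2 (s j)).
Proof. case: P2 => _ [li _] i j E. apply: perm_inj (_ : s i = s j).
 by have /= [] := (@li (inr (s i)) (inr (s j)) E). Qed.

Lemma m_N1 x : inc N1 x != None -> m (inl (inl x)) = None.
Proof.
move=> H /=; case: pickP => [j /eqP Ej|] //.
by case: P1 => _ [_ [ln _]]; move: H; rewrite -Ej (ln (inr j)).
Qed.
Lemma m_N2 x : inc N2 x != None -> m (inl (inr x)) = None.
Proof.
move=> H /=; case: pickP => [j /eqP Ej|] //.
by case: P2 => _ [_ [ln _]]; move: H; rewrite -Ej (ln (inr (s j))).
Qed.
Lemma m_a1 i : m (inl (inl (a1 i))) = None.
Proof.
rewrite /=; case: pickP => [j /eqP Ej|] //.
by case: P1 => _ [li _]; have := @li (inr j) (inl i) Ej.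
Qed.
Lemma m_a2 i : m (inl (inr (a2 i))) = None.
Proof.
rewrite /=; case: pickP => [j /eqP Ej|] //.
by case: P2 => _ [li _]; have := @li (inr (s j)) (inl i) Ej.
Qed.
Lemma m_g i : m (inr (false, i)) = None.
Proof. by []. Qed.
Lemma m_r : m (inr (true, inord 2)) = None.
Proof. by rewrite /= inordK. Qed.
Lemma m_c1 j : m (inl (inl (c1 j))) =
  Some (if j == k then inr (true, inord 0) else inl (inr (c2 (s j)))).
Proof.
rewrite /=; case: pickP => [j' /eqP /c1_inj ->|/(_ j)]; last by rewrite eqxx.
by case: ifP.
Qed.
Lemma m_c2 j : m (inl (inr (c2 (s j)))) =
  Some (if j == k then inr (true, inord 1) else inl (inl (c1 j))).
Proof.
rewrite /=; case: pickP => [j' /eqP /c2s_inj ->|/(_ j)]; last by rewrite eqxx.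
by case: ifP.
Qed.
Lemma m_t0 : m (inr (true, inord 0)) = Some (inl (inl (c1 k))).
Proof. by rewrite /= inordK. Qed.
Lemma m_t1 : m (inr (true, inord 1)) = Some (inl (inr (c2 (s k)))).
Proof. by rewrite /= inordK. Qed.
End S.

Lemma part1 (N1 : multipole) (a1 : 'I_2 -> dart N1) (c1 : 'I_3 -> dart N1)
  (N2 : multipole) (a2 : 'I_2 -> dart N2) (c2 : 'I_3 -> dart N2)
  (s : {perm 'I_3}) (k : 'I_3) :
  pole23 a1 c1 -> pole23 a2 c2 -> proper23 a1 c1 -> proper23 a2 c2 ->
  (forall phi : dart (TT c1 c2 s k) -> G, colouring phi ->
     let col := TTcol phi in
     [/\ col (TT_b N2 a1 ord0) != col (TT_b N2 a1 (inord 1)),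
         col (TT_c N1 a2 ord0) != col (TT_c N1 a2 (inord 1)) &
         col (TT_b N2 a1 ord0) + col (TT_b N2 a1 (inord 1))
         + col (TT_c N1 a2 ord0) + col (TT_c N1 a2 (inord 1))
         + col (TT_r N1 N2) = 0]).
Proof.
move=> P1 P2 pr1 pr2 phi col0 col; subst col.
pose m := TTmatch c1 c2 s k.
pose Ps := @Psi (TTu N1 N2) m phi.
have Pun : forall z (H : m z == None), TTcol phi z = Ps z.
  move=> z H; rewrite /TTcol (insubT (fun x => m x == None) H) /=.
  by rewrite /Ps -(Psi_un (exist _ z H) col0).
have Pun' : forall z (H : m z == None), phi (exist _ z H) = Ps z.
  by move=> z H; rewrite /Ps -(Psi_un (exist _ z H) col0).
pose psi1 x := Ps (inl (inl x)).
pose psi2 x := Ps (inl (inr x)).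
have [[pK1 _] _] := P1.
have [[pK2 _] _] := P2.
have cp1 : colouring psi1.
  split; [|split].
  - by move=> x; apply: Psi_nz.
  - move=> x; apply: Psi_eq; rewrite /jrel /= ?pK1 eqxx //.
  - move=> x y v hx hy xy.
    have Hx : m (inl (inl x)) == None by rewrite /m (m_N1 _ _ _ P1) // hx.
    have Hy : m (inl (inl y)) == None by rewrite /m (m_N1 _ _ _ P1) // hy.
    rewrite /psi1 -(Pun' _ Hx) -(Pun' _ Hy).
    apply: (col0.2.2 _ _ (inl (inl v))); rewrite /= ?hx ?hy //.
have cp2 : colouring psi2.
  split; [|split].
  - by move=> x; apply: Psi_nz.
  - move=> x; apply: Psi_eq; rewrite /jrel /= ?pK2 eqxx //.
  - move=> x y v hx hy xy.
    have Hx : m (inl (inr x)) == None by rewrite /m (m_N2 _ _ _ P2) // hx.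
    have Hy : m (inl (inr y)) == None by rewrite /m (m_N2 _ _ _ P2) // hy.
    rewrite /psi2 -(Pun' _ Hx) -(Pun' _ Hy).
    apply: (col0.2.2 _ _ (inl (inr v))); rewrite /= ?hx ?hy //.
have U1 i : m (inl (inl (a1 i))) == None by rewrite /m (m_a1 _ _ _ P1).
have U2 i : m (inl (inr (a2 i))) == None by rewrite /m (m_a2 _ _ _ P2).
have Ur : m (TT_r N1 N2) == None by rewrite /m /TT_r m_r.
rewrite /TT_b /TT_c !(Pun _ (U1 _)) !(Pun _ (U2 _)) (Pun _ Ur).
have L : lift ord0 ord0 = inord 1 :> 'I_2 by apply/val_inj; rewrite /= inordK.
have S1 : \sum_(i < 2) psi1 (a1 i) = Ps (inl (inl (a1 ord0))) + Ps (inl (inl (a1 (inord 1)))).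
  by rewrite big_ord_recl big_ord1 L.
have S2 : \sum_(i < 2) psi2 (a2 i) = Ps (inl (inr (a2 ord0))) + Ps (inl (inr (a2 (inord 1)))).
  by rewrite big_ord_recl big_ord1 L.
split.
- by rewrite -G_add_eq -S1; case: (pr1 _ cp1).
- by rewrite -G_add_eq -S2; case: (pr2 _ cp2).
have -> : forall a b c d e : G, a + b + c + d + e = (a + b) + (c + d) + e.
  by move=> *; rewrite !addrA.
rewrite -S1 -S2 (pole_sum P1 cp1) (pole_sum P2 cp2).
rewrite [\sum_j psi2 (c2 j)](reindex_inj (@perm_inj _ s)) -big_split /=.
rewrite (bigD1 k) //= big1 ?addr0; last first.
  move=> j jk; have -> : psi1 (c1 j) = psi2 (c2 (s j)); last by rewrite addxx.
  apply: Psi_eq.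
    by rewrite /jrel /m (m_c1 _ _ _ P1) (negbTE jk) !eqxx orbT.
  by rewrite /jrel /m (m_c2 _ _ _ P2) (negbTE jk) !eqxx orbT.
have g0 : psi1 (c1 k) = Ps (inr (false, inord 0)).
  have -> : psi1 (c1 k) = Ps (inr (true, inord 0)).
    apply: Psi_eq.
      by rewrite /jrel /m (m_c1 _ _ _ P1) !eqxx orbT.
    by rewrite /jrel /m m_t0 !eqxx orbT.
  by apply: Psi_eq; rewrite /jrel /= eqxx.
have g1 : psi2 (c2 (s k)) = Ps (inr (false, inord 1)).
  have -> : psi2 (c2 (s k)) = Ps (inr (true, inord 1)).
    apply: Psi_eq.
      by rewrite /jrel /m (m_c2 _ _ _ P2) !eqxx orbT.
    by rewrite /jrel /m m_t1 !eqxx orbT.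
  by apply: Psi_eq; rewrite /jrel /= eqxx.
have g2 : Ps (TT_r N1 N2) = Ps (inr (false, inord 2)).
  by apply: Psi_eq; rewrite /jrel /= eqxx.
have V i : m (inr (false, i)) == None by [].
rewrite g0 g1 g2 -!(Pun' _ (V _)).
have D : forall i j : 'I_3, i != j ->
    phi (exist _ (inr (false, i)) (V i)) != phi (exist _ (inr (false, j)) (V j)).
  move=> i j ij; apply: (col0.2.2 _ _ (inr tt)) => //.
apply: three; try exact: col0.1; apply: D; by rewrite -(inj_eq val_inj) /= !inordK.
Qed.

Lemma G_ne (a b c : G) : a + b + c = 0 -> b != 0 -> a != c.
Proof. move=> /eqP; by case: (Gcases a) => ->; case: (Gcases b) => ->; case: (Gcases c) => ->. Qed.

Lemma sum_one (t : 'I_3) (X Y : G) : \sum_(j < 3) (if j == t then Y else X) = Y.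
Proof.
rewrite !big_ord_recl big_ord0 addr0.
case: t => [[|[|[|]]] H] //=; rewrite /bump /=.
- by rewrite addxx addr0.
- by rewrite addrC -addrA addxx addr0.
- by rewrite addrA addxx add0r.
Qed.

Lemma part2 (N1 : multipole) (a1 : 'I_2 -> dart N1) (c1 : 'I_3 -> dart N1)
  (N2 : multipole) (a2 : 'I_2 -> dart N2) (c2 : 'I_3 -> dart N2)
  (s : {perm 'I_3}) (k : 'I_3) :
  pole23 a1 c1 -> pole23 a2 c2 ->
  (perfect23 a1 c1 -> perfect23 a2 c2 ->
   forall x1 x2 y1 y2 e : G,
     x1 != 0 -> x2 != 0 -> y1 != 0 -> y2 != 0 -> e != 0 ->
     x1 != x2 -> y1 != y2 -> x1 + x2 + y1 + y2 + e = 0 ->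
     exists phi : dart (TT c1 c2 s k) -> G,
       colouring phi /\
       let col := TTcol phi in
       [/\ col (TT_b N2 a1 ord0) = x1, col (TT_b N2 a1 (inord 1)) = x2,
           col (TT_c N1 a2 ord0) = y1, col (TT_c N1 a2 (inord 1)) = y2 &
           col (TT_r N1 N2) = e]).
Proof.
move=> P1 P2 [_ pf1] [_ pf2] x1 x2 y1 y2 e nx1 nx2 ny1 ny2 ne x12 y12 sum.
pose X := x1 + x2; pose Y := y1 + y2.
have nX : X != 0 by rewrite /X G_add_eq.
have nY : Y != 0 by rewrite /Y G_add_eq.
have XYe : X + Y + e = 0 by rewrite /X /Y !addrA.
have dXY : X != Y.
  by apply: (@G_ne X e Y) => //; rewrite -addrA (addrC e) addrA.
have dXe : X != e by apply: (@G_ne X Y e).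
have dYe : Y != e by apply: (@G_ne Y X e) => //; rewrite (addrC Y).
pose xf (i : 'I_2) := if nat_of_ord i == 0%N then x1 else x2.
pose yf (i : 'I_2) := if nat_of_ord i == 0%N then y1 else y2.
have [psi1 [cp1 [ha1 hc1]]] : exists psi, colouring psi /\
    (forall i, psi (a1 i) = xf i) /\ (forall j, psi (c1 j) = (fun _ => X) j).
  apply/pf1; split.
  - by move=> i; rewrite /xf; case: ifP.
  - by [].
  - rewrite big_ord_recl big_ord1 /= !big_ord_recl big_ord0 addr0 addrA addxx add0r.
    by [].
  - by rewrite big_ord_recl big_ord1 /=.
have [psi2 [cp2 [ha2 hc2]]] : exists psi, colouring psi /\
    (forall i, psi (a2 i) = yf i) /\
    (forall j, psi (c2 j) = (fun j => if j == s k then Y else X) j).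
  apply/pf2; split.
  - by move=> i; rewrite /yf; case: ifP.
  - by move=> j /=; case: ifP.
  - by rewrite sum_one big_ord_recl big_ord1 /=.
  - by rewrite big_ord_recl big_ord1 /=.
pose gcol (i : 'I_3) : G := if nat_of_ord i == 0%N then X else if nat_of_ord i == 1%N then Y else e.
pose P (z : dart (TTu N1 N2)) : G :=
  match z with inl (inl x) => psi1 x | inl (inr x) => psi2 x | inr (_, i) => gcol i end.
pose m := TTmatch c1 c2 s k.
have inv : forall z w, jrel m z w -> P z = P w.
  move=> z w /orP[/eqP ->|/eqP].
    case: z => [[x|x]|[b i]] /=; by rewrite ?(cp1.2.1 x) ?(cp2.2.1 x).
  case: z => [[x|x]|[[] i]] /=.
  - case: pickP => [j /eqP <-|_] //.
    case: eqP => [->|jk] [<-] /=; first by rewrite hc1 /gcol inordK.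
    by rewrite hc1 hc2 /= (inj_eq perm_inj) (introF eqP jk).
  - case: pickP => [j /eqP <-|_] //.
    case: eqP => [->|jk] [<-] /=; first by rewrite hc2 /= eqxx /gcol inordK.
    by rewrite hc1 hc2 /= (inj_eq perm_inj) (introF eqP jk).
  - rewrite /gcol; case: ifP => i0; first by case=> <- /=; rewrite hc1.
    case: ifP => i1 //; by case=> <- /=; rewrite hc2 eqxx.
  - by [].
pose phi (u : jdart m) := P (val u).
exists phi; split.
  split; [|split].
  - move=> [[[x|x]|[b i]] H] /=; [exact: cp1.1 | exact: cp2.1 |].
    by rewrite /phi /P /gcol /=; do 2?case: ifP.
  - move=> u; exact: inv_col inv u.
  - move=> [z Hz] [w Hw] v; rewrite /phi /=.
    case: z Hz => [[x|x]|[[] i]] Hz; case: w Hw => [[y|y]|[[] j]] Hw /=; try by [].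
    + move=> E1 E2 nn.
      case Ex: (inc N1 x) E1 => [vx|] //= E1.
      case Ey: (inc N1 y) E2 => [vy|] //= E2.
      apply: (cp1.2.2 x y vx Ex); first by rewrite Ey; rewrite -E2 in E1; case: E1 => ->.
      by apply: contra nn => /eqP exy; subst y; apply/eqP/val_inj.
    + by move=> E1 E2 _; move: E1 E2; do 2?(case: (inc _ _) => [?|] //=); move=> <-.
    + by move=> E1 E2 _; move: E1 E2; do 2?(case: (inc _ _) => [?|] //=); move=> <-.
    + by move=> E1 E2 _; move: E1 E2; do 2?(case: (inc _ _) => [?|] //=); move=> <-.
    + move=> E1 E2 nn.
      case Ex: (inc N2 x) E1 => [vx|] //= E1.
      case Ey: (inc N2 y) E2 => [vy|] //= E2.
      apply: (cp2.2.2 x y vx Ex); first by rewrite Ey; rewrite -E2 in E1; case: E1 => ->.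
      by apply: contra nn => /eqP exy; subst y; apply/eqP/val_inj.
    + by move=> E1 E2 _; move: E1 E2; do 2?(case: (inc _ _) => [?|] //=); move=> <-.
    + by move=> E1 E2 _; move: E1 E2; do 2?(case: (inc _ _) => [?|] //=); move=> <-.
    + by move=> E1 E2 _; move: E1 E2; do 2?(case: (inc _ _) => [?|] //=); move=> <-.
    + move=> _ _ nn.
      have ij : i != j by apply: contra nn => /eqP ->; apply/eqP/val_inj.
      rewrite /gcol; move: ij {Hz Hw nn}.
      case: i => [[|[|[|]]] ?] //; case: j => [[|[|[|]]] ?] //= _; by rewrite // eq_sym.
have TP : forall z (H : m z == None), TTcol phi z = P z.
  by move=> z H; rewrite /TTcol (insubT (fun x => m x == None) H).
rewrite /= !TP; rewrite /m /TT_b /TT_c /TT_r ?(m_a1 _ _ _ P1) ?(m_a2 _ _ _ P2) ?m_r //.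
by rewrite /= !ha1 !ha2 /xf /yf /gcol !inordK.
Qed.

Theorem mainTheorem3
  (N1 : multipole) (a1 : 'I_2 -> dart N1) (c1 : 'I_3 -> dart N1)
  (N2 : multipole) (a2 : 'I_2 -> dart N2) (c2 : 'I_3 -> dart N2)
  (s : {perm 'I_3}) (k : 'I_3) :
  pole23 a1 c1 -> pole23 a2 c2 -> proper23 a1 c1 -> proper23 a2 c2 ->
  (forall phi : dart (TT c1 c2 s k) -> G, colouring phi ->
     let col := TTcol phi in
     [/\ col (TT_b N2 a1 ord0) != col (TT_b N2 a1 (inord 1)),
         col (TT_c N1 a2 ord0) != col (TT_c N1 a2 (inord 1)) &
         col (TT_b N2 a1 ord0) + col (TT_b N2 a1 (inord 1))
         + col (TT_c N1 a2 ord0) + col (TT_c N1 a2 (inord 1))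
         + col (TT_r N1 N2) = 0]) /\
  (perfect23 a1 c1 -> perfect23 a2 c2 ->
   forall x1 x2 y1 y2 e : G,
     x1 != 0 -> x2 != 0 -> y1 != 0 -> y2 != 0 -> e != 0 ->
     x1 != x2 -> y1 != y2 -> x1 + x2 + y1 + y2 + e = 0 ->
     exists phi : dart (TT c1 c2 s k) -> G,
       colouring phi /\
       let col := TTcol phi in
       [/\ col (TT_b N2 a1 ord0) = x1, col (TT_b N2 a1 (inord 1)) = x2,
           col (TT_c N1 a2 ord0) = y1, col (TT_c N1 a2 (inord 1)) = y2 &
           col (TT_r N1 N2) = e]).
Proof.
move=> P1 P2 pr1 pr2; split; first exact: part1.
exact: part2.
Qed.
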